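(* For finite simple graphs $G$ and $H$ with disjoint vertex sets, $\mathrm{mur}(G)+\mathrm{mur}(H)\le\mathrm{mur}(G\cup H)$.
   Context: For a finite simple undirected graph $G$ on vertices $v_1,\dots,v_n$, let $A_G$ be its $(0,1)$-adjacency matrix, $D_G=\mathrm{diag}(d_1,\dots,d_n)$ with $d_i$ the degree of $v_i$, $I$ the $n\times n$ identity matrix and $J$ the $n\times n$ all-ones matrix. A universal adjacency matrix of $G$ is any matrix $\alpha A_G+\beta I+\gamma J+\delta D_G$ with real scalars $\alpha,\beta,\gamma,\delta$ and $\alpha\neq 0$. The minimum universal rank $\mathrm{mur}(G)$ is the minimum rank over all universal adjacency matrices of $G$. The union $G\cup H$ is the graph with vertex set $V(G)\cup V(H)$ and edge set $E(G)\cup E(H)$. *)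

(* Defs.v *)
From HB Require Import structures.
From mathcomp Require Import all_boot all_order all_algebra.
From mathcomp Require Import boolp reals.
Set Implicit Arguments. Unset Strict Implicit. Unset Printing Implicit Defensive.
Import Order.TTheory GRing.Theory Num.Theory.
Local Open Scope ring_scope.

Definition simple_graph (n : nat) (e : rel 'I_n) : Prop :=
  (forall i j, e i j = e j i) /\ (forall i, e i i = false).

Section Mats.
Variable R : realType.

Definition adjmx n (e : rel 'I_n) : 'M[R]_n := \matrix_(i, j) (e i j)%:R.
Definition degmx n (e : rel 'I_n) : 'M[R]_n :=
  \matrix_(i, j) ((i == j)%:R * (#|[set k | e i k]|)%:R).
Definition allones n : 'M[R]_n := const_mx 1.

Definition univmx n (e : rel 'I_n) (a b c d : R) : 'M[R]_n :=
  a *: adjmx e + b%:M + c *: allones n + d *: degmx e.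

Definition univ_rank_attained n (e : rel 'I_n) (k : nat) : Prop :=
  exists a b c d : R, a != 0 /\ \rank (univmx e a b c d) = k.

Lemma univ_rank_attained_ex n (e : rel 'I_n) :
  exists k, `[< univ_rank_attained e k >].
Proof.
exists (\rank (univmx e 1 0 0 0)); apply/asboolP.
by exists 1, 0, 0, 0; split => //; apply: oner_neq0.
Qed.

Definition mur n (e : rel 'I_n) : nat := ex_minn (univ_rank_attained_ex e).
End Mats.

(* Union of graphs on disjoint vertex sets 'I_n and 'I_m (vertex set 'I_(n+m)):
   edges are exactly those of G (on the first n vertices) and of H (on the last m). *)
Definition graph_union n m (eG : rel 'I_n) (eH : rel 'I_m) : rel 'I_(n + m) :=
  fun i j => match split i, split j with
             | inl a, inl b => eG a b
             | inr a, inr b => eH a b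
             | _, _ => false
             end.

(* Main.v *)
Require Import Defs.
From HB Require Import structures.
From mathcomp Require Import all_boot all_order all_algebra zify.
From mathcomp Require Import boolp reals.
Set Implicit Arguments. Unset Strict Implicit. Unset Printing Implicit Defensive.
Import Order.TTheory GRing.Theory Num.Theory.
Local Open Scope ring_scope.

Section LA.
Variable F : fieldType.

Definition sig p (u : 'rV[F]_p) : F := \sum_j u 0 j.

Lemma mul_const p q (u : 'rV[F]_p) :
  u *m (const_mx 1 : 'M_(p, q)) = sig u *: const_mx 1.
Proof.
apply/matrixP => i k; rewrite (ord1 i) !mxE /sig mulr1; apply: eq_bigr => j _.
by rewrite mxE mulr1.
Qed.

Lemma sig_split p q (u : 'rV[F]_(p + q)) : sig u = sig (lsubmx u) + sig (rsubmx u).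
Proof.
rewrite /sig big_split_ord /=; congr (_ + _); apply: eq_bigr => j _; by rewrite mxE.
Qed.

Lemma rank_const p : (\rank (const_mx (GRing.one F) : 'M[F]_p) <= 1)%N.
Proof.
have -> : (const_mx 1 : 'M[F]_p) = (const_mx 1 : 'cV_p) *m (const_mx 1 : 'rV_p).
  apply/matrixP => i j; rewrite !mxE big_ord1 !mxE mulr1 //.
by apply: leq_trans (mxrankM_maxl _ _) (rank_leq_col _).
Qed.

Lemma drop_lemma p (P : 'M[F]_p) (v : 'rV_p) (k : F) :
  P^T = P -> k != 0 -> v *m P = k *: const_mx 1 -> sig v != 0 ->
  exists c, (\rank (P + c *: const_mx (GRing.one F))%R < \rank P)%N.
Proof.
move=> sP k0 vP sv0; exists (- k / sig v).
set P' := P + _.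
have a_eq : (const_mx 1 : 'rV_p) = k^-1 *: (v *m P) by rewrite vP scalerA mulVf // scale1r.
have sub1 : (kermx P <= kermx P')%MS.
  rewrite sub_kermx /P' mulmxDr mulmx_ker add0r.
  apply/eqP/row_matrixP => i; rewrite row0 -scalemxAr linearZ /= row_mul mul_const.
  suff -> : sig (row i (kermx P)) = 0 by rewrite !scale0r scaler0.
  set w := row i (kermx P).
  have wP : w *m P = 0 by apply/eqP; rewrite -sub_kermx row_sub.
  have : (w *m (const_mx 1 : 'rV_p)^T) 0 0 = sig w.
    rewrite !mxE /sig; apply: eq_bigr => j _; by rewrite !mxE mulr1.
  rewrite -{}[in RHS]/(sig w) => <-.
  by rewrite a_eq linearZ /= trmx_mul sP -scalemxAr mulmxA wP mul0mx scaler0 mxE.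
have vK' : (v <= kermx P')%MS.
  rewrite sub_kermx /P' mulmxDr vP -scalemxAr mul_const scalerA -scalerDl.
  by rewrite -mulrA mulVf // mulr1 addrN scale0r.
have vK : ~~ (v <= kermx P)%MS.
  rewrite sub_kermx vP scaler_eq0 negb_or k0 /=.
  case: (pickP (fun _ : 'I_p => true)) => [j0 _|H0].
    by apply/eqP => /matrixP /(_ 0 j0); rewrite !mxE; apply/eqP; exact: oner_neq0.
  move: sv0; rewrite /sig big1 ?eqxx // => j _; by have := H0 j.
have := mxrank_leqif_sup sub1.
move/ltn_leqif; have -> : (kermx P' <= kermx P)%MS = false.
  apply/negbTE; apply: contra vK => H; exact: submx_trans vK' H.
rewrite !mxrank_ker /= => H.
have := rank_leq_row P; have := rank_leq_row P'; lia.
Qed.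

Lemma keyL p q (P : 'M[F]_p) (Q : 'M[F]_q) (g : F) : P^T = P -> Q^T = Q ->
  exists c1 c2 : F,
  (\rank (P + c1 *: const_mx (GRing.one F))%R + \rank (Q + c2 *: const_mx (GRing.one F))%R
   <= \rank (block_mx (P + g *: const_mx (GRing.one F)) (g *: const_mx (GRing.one F))
                      (g *: const_mx (GRing.one F)) (Q + g *: const_mx (GRing.one F)))%R)%N.
Proof.
move=> sP sQ.
set M := block_mx _ _ _ _.
set D := block_mx P 0 0 Q.
have MD : M = D + g *: const_mx 1.
  by rewrite /M /D -block_mx_const scale_block_mx add_block_mx !add0r.
have rD : \rank D = (\rank P + \rank Q)%N by rewrite rank_diag_block_mx.
have DM : D = M + (- g) *: const_mx 1 by rewrite MD scaleNr addrK.
case: (eqVneq g 0) => [g0|g0].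
  by exists 0, 0; rewrite !scale0r !addr0 -rD MD g0 scale0r addr0.
have rD1 : (\rank D <= \rank M + 1)%N.
  rewrite DM; apply: leq_trans (mxrank_add _ _) _; rewrite leq_add2l.
  exact: leq_trans (mxrank_scale _ _) (rank_const _).
set K := kermx M.
have KM : K *m M = 0 by rewrite mulmx_ker.
case: (boolP [exists i, sig (row i K) != 0]) => [/existsP [i Hi] | /existsPn H].
  set u := row i K.
  have uM : u *m M = 0 by apply/eqP; rewrite -sub_kermx row_sub.
  move: uM; rewrite -(hsubmxK u) /M mul_row_block.
  move/eqP; rewrite row_mx_eq0 => /andP[/eqP E1 /eqP E2].
  have su : sig u = sig (lsubmx u) + sig (rsubmx u) by rewrite sig_split.
  have k0 : - (g * sig u) != 0 by rewrite oppr_eq0 mulf_neq0.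
  have vP : lsubmx u *m P = (- (g * sig u)) *: const_mx 1.
    move: E1; rewrite mulmxDr -!scalemxAr !mul_const -addrA.
    move/eqP; rewrite addr_eq0 => /eqP ->.
    by rewrite su !scalerA -scalerDl -scaleNr mulrDr.
  have vQ : rsubmx u *m Q = (- (g * sig u)) *: const_mx 1.
    move: E2; rewrite mulmxDr -!scalemxAr !mul_const addrCA.
    move/eqP; rewrite addr_eq0 => /eqP ->.
    by rewrite su !scalerA -scalerDl -scaleNr mulrDr.
  case: (eqVneq (sig (lsubmx u)) 0) => h1.
    have h2 : sig (rsubmx u) != 0 by move: Hi; rewrite -/u su h1 add0r.
    have [c H0] := drop_lemma sQ k0 vQ h2.
    exists 0, c.
    rewrite scale0r addr0; rewrite rD in rD1; rewrite -/M; move: rD1 H0; lia.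
  have [c H0] := drop_lemma sP k0 vP h1.
  exists c, 0.
  rewrite scale0r addr0; rewrite rD in rD1; rewrite -/M; move: rD1 H0; lia.
exists 0, 0; rewrite !scale0r !addr0 -rD.
have KJ : K *m (const_mx 1 : 'M[F]_(p + q)) = 0.
  apply/row_matrixP => i; rewrite row0 row_mul mul_const.
  by move: (H i); rewrite negbK => /eqP ->; rewrite scale0r.
have sub : (K <= kermx D)%MS.
  by rewrite sub_kermx DM mulmxDr KM -scalemxAr KJ scaler0 addr0.
have := mxrankS sub; rewrite /K !mxrank_ker.
have := rank_leq_row D; have := rank_leq_row M; lia.
Qed.
End LA.

Section G.
Variable R : realType.

Lemma univmx_shift n (e : rel 'I_n) (a b c d : R) :
  univmx e a b c d = univmx e a b 0 d + c *: const_mx 1.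
Proof. by rewrite /univmx /allones scale0r addr0 addrAC. Qed.

Lemma univmx_sym n (e : rel 'I_n) (a b c d : R) :
  simple_graph e -> (univmx e a b c d)^T = univmx e a b c d.
Proof.
move=> [se _]; apply/matrixP => i j; rewrite !mxE se eq_sym.
case: (eqVneq j i) => [->|] //=; rewrite !mul0r //.
Qed.

Lemma splitL n m (i : 'I_n) : split (lshift m i) = inl i.
Proof. exact: (unsplitK (inl _ i)). Qed.
Lemma splitR n m (i : 'I_m) : split (rshift n i) = inr i.
Proof. exact: (unsplitK (inr _ i)). Qed.

Lemma degL n m (eG : rel 'I_n) (eH : rel 'I_m) i :
  #|[set k | graph_union eG eH (lshift m i) k]| = #|[set k | eG i k]|.
Proof.
rewrite -(card_imset _ (@lshift_inj n m)); apply: eq_card => k.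
rewrite inE /graph_union splitL; case: (split_ordP k) => k' ->.
  by rewrite mem_imset ?inE //; exact: lshift_inj.
apply/esym/negbTE/imsetP => [[x _ /eqP]].
by rewrite eq_sym eq_lrshift.
Qed.

Lemma degR n m (eG : rel 'I_n) (eH : rel 'I_m) i :
  #|[set k | graph_union eG eH (rshift n i) k]| = #|[set k | eH i k]|.
Proof.
rewrite -(card_imset _ (@rshift_inj n m)); apply: eq_card => k.
rewrite inE /graph_union splitR; case: (split_ordP k) => k' ->.
  apply/esym/negbTE/imsetP => [[x _ /eqP]].
  by rewrite eq_sym eq_rlshift.
by rewrite mem_imset ?inE //; exact: rshift_inj.
Qed.

Lemma union_block n m (eG : rel 'I_n) (eH : rel 'I_m) (a b c d : R) :
  univmx (graph_union eG eH) a b c d =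
  block_mx (univmx eG a b c d) (c *: const_mx 1) (c *: const_mx 1) (univmx eH a b c d).
Proof.
apply/matrixP => i j.
case: (split_ordP i) => i' ->; case: (split_ordP j) => j' ->;
  rewrite ?block_mxEul ?block_mxEur ?block_mxEdl ?block_mxEdr !mxE
    ?degL ?degR /graph_union ?splitL ?splitR ?eq_lrshift ?eq_rlshift
    ?(inj_eq (@lshift_inj _ _)) ?(inj_eq (@rshift_inj _ _)) //=.
all: by rewrite !mul0r !mulr0 !addr0 !add0r.
Qed.

Lemma mur_le n (e : rel 'I_n) k : univ_rank_attained R e k -> (mur R e <= k)%N.
Proof. rewrite /mur; case: ex_minnP => x Hx Hmin H; apply: Hmin; exact/asboolP. Qed.

Lemma mur_att n (e : rel 'I_n) : univ_rank_attained R e (mur R e).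
Proof. rewrite /mur; case: ex_minnP => x /asboolP Hx _; exact: Hx. Qed.
End G.

Theorem lemma13 (R : realType) (n m : nat) (eG : rel 'I_n) (eH : rel 'I_m) :
  simple_graph eG -> simple_graph eH ->
  (mur R eG + mur R eH <= mur R (graph_union eG eH))%N.
Proof.
move=> sG sH.
have [a [b [c [d [a0 Hr]]]]] := mur_att R (graph_union eG eH).
rewrite union_block (univmx_shift eG a b c d) (univmx_shift eH a b c d) in Hr.
have [c1 [c2 Hc]] := keyL c (univmx_sym a b 0 d sG) (univmx_sym a b 0 d sH).
rewrite Hr in Hc.
have h1 : (mur R eG <= \rank (univmx eG a b c1 d))%N by apply: mur_le; exists a, b, c1, d.
have h2 : (mur R eH <= \rank (univmx eH a b c2 d))%N by apply: mur_le; exists a, b, c2, d.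
rewrite (univmx_shift eG a b c1 d) in h1; rewrite (univmx_shift eH a b c2 d) in h2.
by apply: leq_trans Hc; apply: leq_add.
Qed.
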